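(* Let $\Gamma\subseteq\mathit{Aff}(2,\mathbb{H})$ be a subgroup acting freely on $\mathbb{H}^2$. Then for every $A\in\Gamma$, the holonomy part $h(A)$ has $1$ as a right eigenvalue.
   Context: $\mathit{Aff}(2,\mathbb{H})$ is identified with invertible $3\times3$ quaternionic matrices $A=\begin{pmatrix} a&b&r\\ c&d&s\\ 0&0&1\end{pmatrix}$ acting on $(x,y)\in\mathbb{H}^2$ by $(x,y)\mapsto(ax+by+r,cx+dy+s)$. The holonomy part of $A$ is $h(A)=\begin{pmatrix}a&b\\ c&d\end{pmatrix}\in GL(2,\mathbb{H})$. A right eigenvalue of a quaternionic matrix $T$ is $\lambda\in\mathbb{H}$ with $Tv=v\lambda$ for some nonzero $v\in\mathbb{H}^2$. *)

(* Defs.v *)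
From HB Require Import structures.
From mathcomp Require Import all_boot all_order all_algebra.
From mathcomp Require Import reals.
Set Implicit Arguments. Unset Strict Implicit. Unset Printing Implicit Defensive.
Import Order.TTheory GRing.Theory Num.Theory.
Local Open Scope ring_scope.

Section Quaternions.
Variable R : realType.

(** Real quaternions q = q0 + q1 i + q2 j + q3 k. *)
Record quat := Quat { q0 : R; q1 : R; q2 : R; q3 : R }.

Definition qzero : quat := Quat 0 0 0 0.
Definition qone : quat := Quat 1 0 0 0.
Definition qadd (p q : quat) : quat :=
  Quat (q0 p + q0 q) (q1 p + q1 q) (q2 p + q2 q) (q3 p + q3 q).
(** Hamilton product: i^2 = j^2 = k^2 = ijk = -1. *)
Definition qmul (p q : quat) : quat :=
  Quat (q0 p * q0 q - q1 p * q1 q - q2 p * q2 q - q3 p * q3 q)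
       (q0 p * q1 q + q1 p * q0 q + q2 p * q3 q - q3 p * q2 q)
       (q0 p * q2 q - q1 p * q3 q + q2 p * q0 q + q3 p * q1 q)
       (q0 p * q3 q + q1 p * q2 q - q2 p * q1 q + q3 p * q0 q).

Record qmat2 := QMat2 { m11 : quat; m12 : quat; m21 : quat; m22 : quat }.

Definition qmat2_apply (T : qmat2) (v : quat * quat) : quat * quat :=
  (qadd (qmul (m11 T) v.1) (qmul (m12 T) v.2),
   qadd (qmul (m21 T) v.1) (qmul (m22 T) v.2)).

Definition right_eigenvalue (T : qmat2) (lam : quat) : Prop :=
  exists v : quat * quat, v <> (qzero, qzero) /\
    qmat2_apply T v = (qmul v.1 lam, qmul v.2 lam).

(** The matrix [[a b r];[c d s];[0 0 1]]. *)
Record qaff := QAff { aa : quat; ab : quat; ac : quat; ad : quat;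
                      ar : quat; as_ : quat }.

Definition qaff_act (A : qaff) (p : quat * quat) : quat * quat :=
  (qadd (qadd (qmul (aa A) p.1) (qmul (ab A) p.2)) (ar A),
   qadd (qadd (qmul (ac A) p.1) (qmul (ad A) p.2)) (as_ A)).

(** Product of 3x3 matrices of the above shape. *)
Definition qaff_mul (A B : qaff) : qaff :=
  QAff (qadd (qmul (aa A) (aa B)) (qmul (ab A) (ac B)))
       (qadd (qmul (aa A) (ab B)) (qmul (ab A) (ad B)))
       (qadd (qmul (ac A) (aa B)) (qmul (ad A) (ac B)))
       (qadd (qmul (ac A) (ab B)) (qmul (ad A) (ad B)))
       (qadd (qadd (qmul (aa A) (ar B)) (qmul (ab A) (as_ B))) (ar A))
       (qadd (qadd (qmul (ac A) (ar B)) (qmul (ad A) (as_ B))) (as_ A)).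

Definition qaff_one : qaff := QAff qone qzero qzero qone qzero qzero.

(** Invertible as a 3x3 quaternionic matrix (two-sided inverse; an inverse of
    such a matrix is automatically of the same affine shape, and we take it so). *)
Definition qaff_inverse (A B : qaff) : Prop :=
  qaff_mul A B = qaff_one /\ qaff_mul B A = qaff_one.

Definition holonomy (A : qaff) : qmat2 := QMat2 (aa A) (ab A) (ac A) (ad A).

Definition is_aff_subgroup (G : qaff -> Prop) : Prop :=
  [/\ G qaff_one,
      (forall A B, G A -> G B -> G (qaff_mul A B)) &
      (forall A, G A -> exists B, G B /\ qaff_inverse A B)].

Definition acts_freely (G : qaff -> Prop) : Prop :=
  forall A, G A -> (exists p, qaff_act A p = p) -> A = qaff_one.

End Quaternions.

(* Main.v *)
Require Import Defs.
From mathcomp Require Import all_boot all_order all_algebra.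
From mathcomp Require Import reals.
From mathcomp Require Import ring lra.
From Stdlib Require Import Classical.
Set Implicit Arguments. Unset Strict Implicit. Unset Printing Implicit Defensive.
Import Order.TTheory GRing.Theory Num.Theory.
Local Open Scope ring_scope.

Definition qopp {R : realType} (p : quat R) : quat R :=
  Quat (- q0 p) (- q1 p) (- q2 p) (- q3 p).
Definition qsub {R : realType} (p q : quat R) := qadd p (qopp q).
Definition qnorm {R : realType} (p : quat R) : R :=
  q0 p ^+ 2 + q1 p ^+ 2 + q2 p ^+ 2 + q3 p ^+ 2.
Definition qinv {R : realType} (p : quat R) : quat R :=
  Quat (q0 p / qnorm p) (- q1 p / qnorm p) (- q2 p / qnorm p) (- q3 p / qnorm p).
Arguments qinv : simpl never.

Lemma quat_eq {R : realType} (p q : quat R) :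
  q0 p = q0 q -> q1 p = q1 q -> q2 p = q2 q -> q3 p = q3 q -> p = q.
Proof. by case: p => ????; case: q => ???? /= -> -> -> ->. Qed.

Ltac qunf := cbv beta iota delta [qmul qadd qopp qsub qone qzero q0 q1 q2 q3].
Ltac qring := apply: quat_eq; qunf; ring.

Lemma qnorm_neq0 {R : realType} (p : quat R) : p <> qzero R -> qnorm p != 0.
Proof.
move=> hp; apply/negP => /eqP hn; apply: hp.
have h0 : 0 <= q0 p ^+ 2 := sqr_ge0 _.
have h1 : 0 <= q1 p ^+ 2 := sqr_ge0 _.
have h2 : 0 <= q2 p ^+ 2 := sqr_ge0 _.
have h3 : 0 <= q3 p ^+ 2 := sqr_ge0 _.
rewrite /qnorm in hn.
have e0 : q0 p ^+ 2 = 0 by lra.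
have e1 : q1 p ^+ 2 = 0 by lra.
have e2 : q2 p ^+ 2 = 0 by lra.
have e3 : q3 p ^+ 2 = 0 by lra.
move/eqP: e0; rewrite sqrf_eq0 => /eqP e0.
move/eqP: e1; rewrite sqrf_eq0 => /eqP e1.
move/eqP: e2; rewrite sqrf_eq0 => /eqP e2.
move/eqP: e3; rewrite sqrf_eq0 => /eqP e3.
by apply: quat_eq.
Qed.

Lemma qmulV {R : realType} (p : quat R) : p <> qzero R -> qmul p (qinv p) = qone R.
Proof.
move=> /qnorm_neq0 hn; rewrite /qinv; move: hn; rewrite /qnorm => hn.
apply: quat_eq; rewrite /qmul /qone /=; field; exact: hn.
Qed.

Lemma qVmul {R : realType} (p : quat R) : p <> qzero R -> qmul (qinv p) p = qone R.
Proof.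
move=> /qnorm_neq0 hn; rewrite /qinv; move: hn; rewrite /qnorm => hn.
apply: quat_eq; rewrite /qmul /qone /=; field; exact: hn.
Qed.

Lemma qmulA {R : realType} (p q r : quat R) : qmul p (qmul q r) = qmul (qmul p q) r.
Proof. qring. Qed.
Lemma q1mul {R : realType} (p : quat R) : qmul (qone R) p = p.
Proof. qring. Qed.

Lemma qone_neq0 {R : realType} : qone R <> qzero R.
Proof. by case => /eqP; rewrite oner_eq0. Qed.

Lemma rinv {R : realType} (p : quat R) : p <> qzero R -> exists u, qmul p u = qone R.
Proof. by move=> h; exists (qinv p); apply: qmulV. Qed.

Lemma solve {R : realType} (a b c d : quat R) :
  (exists x y, (x, y) <> (qzero R, qzero R) /\
     qadd (qmul a x) (qmul b y) = qzero R /\ qadd (qmul c x) (qmul d y) = qzero R)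
  \/ (forall r s, exists x y,
     qadd (qmul a x) (qmul b y) = r /\ qadd (qmul c x) (qmul d y) = s).
Proof.
have nz1 : forall x : quat R, (x, qone R) <> (qzero R, qzero R).
  by move=> x [] _ /eqP; rewrite oner_eq0.
case: (classic (a = qzero R)) => Ha.
  case: (classic (c = qzero R)) => Hc.
    left; exists (qone R), (qzero R); split.
      by move=> [] /eqP; rewrite oner_eq0.
    by rewrite Ha Hc; split; qring.
  have [u Hu] := rinv Hc.
  case: (classic (b = qzero R)) => Hb.
    left; exists (qopp (qmul u d)), (qone R); split; first by [].
    rewrite Ha Hb; split; first by qring.
    have e : qadd (qmul c (qopp (qmul u d))) (qmul d (qone R))
        = qsub (qmul d (qone R)) (qmul (qmul c u) d) by qring.
    by rewrite e Hu; qring.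
  right=> r s.
  have [w Hw] := rinv Hb.
  exists (qmul u (qsub s (qmul d (qmul w r)))), (qmul w r); rewrite Ha; split.
    have e : qadd (qmul (qzero R) (qmul u (qsub s (qmul d (qmul w r))))) (qmul b (qmul w r))
      = qmul (qmul b w) r by qring.
    by rewrite e Hw q1mul.
  by rewrite qmulA Hu; qring.
have [u Hu] := rinv Ha.
case: (classic (qsub d (qmul (qmul c u) b) = qzero R)) => Hd.
  left; exists (qopp (qmul u b)), (qone R); split; first by [].
  split.
    have e : qadd (qmul a (qopp (qmul u b))) (qmul b (qone R))
        = qsub (qmul b (qone R)) (qmul (qmul a u) b) by qring.
    by rewrite e Hu; qring.
  have e : qadd (qmul c (qopp (qmul u b))) (qmul d (qone R))
     = qmul (qsub d (qmul (qmul c u) b)) (qone R) by qring.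
  by rewrite e Hd; qring.
right=> r s.
have [w Hw] := rinv Hd.
move: Hw; set del := qsub d _ => Hw.
exists (qmul u (qsub r (qmul b (qmul w (qsub s (qmul (qmul c u) r)))))),
       (qmul w (qsub s (qmul (qmul c u) r))); split.
  by rewrite qmulA Hu; qring.
have e : qadd (qmul c (qmul u (qsub r (qmul b (qmul w (qsub s (qmul (qmul c u) r)))))))
              (qmul d (qmul w (qsub s (qmul (qmul c u) r))))
   = qadd (qmul (qmul c u) r) (qmul (qmul del w) (qsub s (qmul (qmul c u) r))).
  by rewrite /del; qring.
by rewrite e Hw q1mul; qring.
Qed.

Theorem mainTheorem6 (R : realType) (G : qaff R -> Prop) :
  is_aff_subgroup G -> acts_freely G ->
  forall A, G A -> right_eigenvalue (holonomy A) (qone R).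
Proof.
move=> _ Hfree A GA.
case: (solve (qsub (aa A) (qone R)) (ab A) (ac A) (qsub (ad A) (qone R))).
  move=> [x [y [nz [e1 e2]]]].
  exists (x, y); split; first by [].
  rewrite /qmat2_apply /=; congr (_, _).
    have f0 := congr1 (@q0 R) e1; have f1 := congr1 (@q1 R) e1;
    have f2 := congr1 (@q2 R) e1; have f3 := congr1 (@q3 R) e1.
    move: f0 f1 f2 f3; qunf; move=> f0 f1 f2 f3; apply: quat_eq; qunf; lra.
  have f0 := congr1 (@q0 R) e2; have f1 := congr1 (@q1 R) e2;
  have f2 := congr1 (@q2 R) e2; have f3 := congr1 (@q3 R) e2.
  move: f0 f1 f2 f3; qunf; move=> f0 f1 f2 f3; apply: quat_eq; qunf; lra.
move=> /(_ (qopp (ar A)) (qopp (as_ A))) [x [y [e1 e2]]].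
have fix1 : qaff_act A (x, y) = (x, y).
  rewrite /qaff_act /=; congr (_, _).
    have f0 := congr1 (@q0 R) e1; have f1 := congr1 (@q1 R) e1;
    have f2 := congr1 (@q2 R) e1; have f3 := congr1 (@q3 R) e1.
    move: f0 f1 f2 f3; qunf; move=> f0 f1 f2 f3; apply: quat_eq; qunf; lra.
  have f0 := congr1 (@q0 R) e2; have f1 := congr1 (@q1 R) e2;
  have f2 := congr1 (@q2 R) e2; have f3 := congr1 (@q3 R) e2.
  move: f0 f1 f2 f3; qunf; move=> f0 f1 f2 f3; apply: quat_eq; qunf; lra.
have -> := Hfree A GA (ex_intro _ _ fix1).
exists (qone R, qzero R); split.
  by move=> [] /eqP; rewrite oner_eq0.
rewrite /qmat2_apply /=; congr (_, _); qring.
Qed.
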